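(* Let $\Omega$ be a domain in $\mathbb R^n$, $n\ge3$, and let $(f,\Gamma)$ satisfy the standing structural assumptions. Assume that $0<v\in USC(\Omega)$ is a viscosity sub-solution of $f(\lambda(-A^u))=1$ in $\Omega$. Then for all $x\in\Omega$, $$\mathrm{dist}(x,\partial\Omega)^{\frac{n-2}{2}}v(x)\le\alpha,$$ where $\alpha=\alpha(f)$ is the constant of the canonical solutions.
   Context: Let $n\ge3$. For a positive $C^2$ function $u$, its conformal Hessian is $A^u=-\frac{2}{n-2}u^{-\frac{n+2}{n-2}}\nabla^2u+\frac{2n}{(n-2)^2}u^{-\frac{2n}{n-2}}\nabla u\otimes\nabla u-\frac{2}{(n-2)^2}u^{-\frac{2n}{n-2}}|\nabla u|^2I$, and $\lambda(-A^u)$ is the vector of eigenvalues of $-A^u$. Let $\Gamma_n=\{\mu:\mu_i>0\ \forall i\}$. Standing structural assumptions on $(f,\Gamma)$: $\Gamma\subset\mathbb R^n$ is an open symmetric cone with vertex at the origin, $\Gamma+\Gamma_n\subset\Gamma$; $f\in C^0(\bar\Gamma)$ symmetric, $f>0$ in $\Gamma$, $f=0$ on $\partial\Gamma$, $f(\lambda+\mu)\ge f(\lambda)$ for $\lambda\in\Gamma,\mu\in\Gamma_n$, $f$ homogeneous of some positive degree. Viscosity sub-solution: $v\in USC(\Omega)$ (upper semicontinuous, values in $\mathbb R\cup\{-\infty\}$) such that for every $x_0\in\Omega$, $\varphi\in C^2(\Omega)$ with $(v-\varphi)(x_0)=0$, $v-\varphi\le0$ near $x_0$, one has $\lambda(-A^\varphi(x_0))\in\bar\Gamma$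 and $f(\lambda(-A^\varphi(x_0)))\ge1$. Canonical solutions: there is a unique constant $\alpha=\alpha(f)>0$ such that for all $R>0$, $x_0\in\mathbb R^n$ the functions $u^{(in)}_{R,x_0}(x)=\alpha\big(\frac{R}{R^2-|x-x_0|^2}\big)^{\frac{n-2}{2}}$ and $u^{(out)}_{R,x_0}(x)=\alpha\big(\frac{R}{|x-x_0|^2-R^2}\big)^{\frac{n-2}{2}}$ satisfy $f(\lambda(-A^{u}))=1$ in $B_R(x_0)$ and in $\mathbb R^n\setminus\bar B_R(x_0)$ respectively. *)

(* Defs.v *)
From mathcomp Require Import ssreflect ssrfun ssrbool eqtype ssrnat seq
  choice fintype bigop finfun fingroup perm.
From Stdlib Require Import Reals.

Set Implicit Arguments.
Unset Strict Implicit.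

Local Open Scope R_scope.

Definition pt (n : nat) := 'I_n -> R.
Definition mat (n : nat) := 'I_n -> 'I_n -> R.

Definition rsum (n : nat) (F : 'I_n -> R) : R := \big[Rplus/R0]_(i < n) F i.

Definition dot n (x y : pt n) : R := rsum (fun i => x i * y i).
Definition norm n (x : pt n) : R := sqrt (dot x x).
Definition pdist n (x y : pt n) : R := norm (fun i => x i - y i).

Definition ptadd n (x y : pt n) : pt n := fun i => x i + y i.
Definition ptscal n (t : R) (x : pt n) : pt n := fun i => t * x i.
Definition e_ n (i : 'I_n) : pt n := fun j => if j == i then 1 else 0.

Definition ball n (x0 : pt n) (r : R) : pt n -> Prop := fun x => pdist x x0 < r.

Definition is_open n (U : pt n -> Prop) : Prop :=
  forall x, U x -> exists r, 0 < r /\ forall y, pdist y x < r -> U y.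

Definition is_connected n (U : pt n -> Prop) : Prop :=
  forall A B : pt n -> Prop, is_open A -> is_open B ->
    (forall x, U x -> A x \/ B x) ->
    (forall x, U x -> A x -> B x -> False) ->
    (exists x, U x /\ A x) -> (exists x, U x /\ B x) -> False.

Definition is_domain n (U : pt n -> Prop) : Prop :=
  (exists x, U x) /\ is_open U /\ is_connected U.

Definition closure n (G : pt n -> Prop) : pt n -> Prop :=
  fun x => forall eps, 0 < eps -> exists y, G y /\ pdist y x < eps.

Definition cont_on n (U : pt n -> Prop) (g : pt n -> R) : Prop :=
  forall x, U x -> forall eps, 0 < eps -> exists d, 0 < d /\
    forall y, U y -> pdist y x < d -> Rabs (g y - g x) < eps.

Definition usc_on n (U : pt n -> Prop) (g : pt n -> R) : Prop :=
  forall x, U x -> forall eps, 0 < eps -> exists d, 0 < d /\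
    forall y, U y -> pdist y x < d -> g y < g x + eps.

Definition partial_is n (u : pt n -> R) (i : 'I_n) (x : pt n) (l : R) : Prop :=
  derivable_pt_lim (fun t => u (ptadd x (ptscal t (e_ i)))) 0 l.

Definition C2_on n (U : pt n -> Prop) (u : pt n -> R)
    (Du : 'I_n -> pt n -> R) (D2u : 'I_n -> 'I_n -> pt n -> R) : Prop :=
  cont_on U u /\
  (forall i x, U x -> partial_is u i x (Du i x)) /\
  (forall i j x, U x -> partial_is (Du i) j x (D2u i j x)) /\
  (forall i, cont_on U (Du i)) /\
  (forall i j, cont_on U (D2u i j)).

Definition mmul n (A B : mat n) : mat n := fun i j => rsum (fun k => A i k * B k j).
Definition mtr n (A : mat n) : mat n := fun i j => A j i.
Definition mid n : mat n := fun i j => if i == j then 1 else 0.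
Definition mdiag n (mu : pt n) : mat n := fun i j => if i == j then mu i else 0.

(* mu is the vector of eigenvalues (in some order, with multiplicity) of the
   symmetric matrix M: M = Q diag(mu) Q^T with Q orthogonal. *)
Definition is_eigvals n (M : mat n) (mu : pt n) : Prop :=
  exists Q : mat n, mmul (mtr Q) Q = @mid n /\
                    M = mmul (mmul Q (mdiag mu)) (mtr Q).

(* A^u at a point where u = u0 > 0, grad u = g, Hessian = H *)
Definition conf_hess n (u0 : R) (g : pt n) (H : mat n) : mat n :=
  let m := INR n in
  fun i j =>
    - (2 / (m - 2)) * Rpower u0 (- ((m + 2) / (m - 2))) * H i j
    + (2 * m / ((m - 2) * (m - 2))) * Rpower u0 (- (2 * m / (m - 2))) * (g i * g j)
    - (2 / ((m - 2) * (m - 2))) * Rpower u0 (- (2 * m / (m - 2))) * dot g g * @mid n i j.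

Definition negA n (u : pt n -> R) (Du : 'I_n -> pt n -> R)
    (D2u : 'I_n -> 'I_n -> pt n -> R) (x : pt n) : mat n :=
  fun i j => - conf_hess (u x) (fun k => Du k x) (fun k l => D2u k l x) i j.

Definition Gamma_n n : pt n -> Prop := fun mu => forall i, 0 < mu i.

Definition permute n (s : {perm 'I_n}) (mu : pt n) : pt n := fun i => mu (s i).

Definition structural n (f : pt n -> R) (G : pt n -> Prop) (deg : R) : Prop :=
  (exists mu, G mu) /\ is_open G /\
  (forall s mu, G mu -> G (permute s mu)) /\
  (forall t mu, 0 < t -> G mu -> G (ptscal t mu)) /\
  (forall mu nu, G mu -> Gamma_n nu -> G (ptadd mu nu)) /\
  cont_on (closure G) f /\
  (forall s mu, closure G mu -> f (permute s mu) = f mu) /\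
  (forall mu, G mu -> 0 < f mu) /\
  (forall mu, closure G mu -> ~ G mu -> f mu = 0) /\
  (forall mu nu, G mu -> Gamma_n nu -> f (ptadd mu nu) >= f mu) /\
  0 < deg /\
  (forall t mu, 0 < t -> closure G mu -> f (ptscal t mu) = Rpower t deg * f mu).

Definition visc_subsol n (f : pt n -> R) (G : pt n -> Prop)
    (Om : pt n -> Prop) (v : pt n -> R) : Prop :=
  forall (x0 : pt n) (phi : pt n -> R) Dphi D2phi,
    Om x0 -> C2_on Om phi Dphi D2phi ->
    v x0 - phi x0 = 0 ->
    (exists d, 0 < d /\ forall y, Om y -> pdist y x0 < d -> v y - phi y <= 0) ->
    exists mu, is_eigvals (negA phi Dphi D2phi x0) mu /\
               closure G mu /\ f mu >= 1.

Definition classical_sol n (f : pt n -> R) (U : pt n -> Prop) (u : pt n -> R) : Prop :=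
  exists Du D2u, C2_on U u Du D2u /\
    forall x, U x -> exists mu, is_eigvals (negA u Du D2u x) mu /\ f mu = 1.

Definition u_in n (alpha Rr : R) (x0 : pt n) : pt n -> R :=
  fun x => alpha * Rpower (Rr / (Rr * Rr - pdist x x0 * pdist x x0)) ((INR n - 2) / 2).

Definition u_out n (alpha Rr : R) (x0 : pt n) : pt n -> R :=
  fun x => alpha * Rpower (Rr / (pdist x x0 * pdist x x0 - Rr * Rr)) ((INR n - 2) / 2).

Definition canonical_const n (f : pt n -> R) (alpha : R) : Prop :=
  0 < alpha /\
  forall (Rr : R) (x0 : pt n), 0 < Rr ->
    classical_sol f (ball x0 Rr) (u_in alpha Rr x0) /\
    classical_sol f (fun x => Rr < pdist x x0) (u_out alpha Rr x0).

(* Main.v *)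
Require Import Defs.
From HB Require Import structures.
From mathcomp Require Import ssreflect ssrfun ssrbool eqtype ssrnat seq
  choice fintype bigop finfun fingroup perm.
From Stdlib Require Import Reals Lra.
From Stdlib Require Import ClassicalEpsilon Classical FunctionalExtensionality.
Local Open Scope R_scope.
Set Implicit Arguments.
Unset Strict Implicit.
Set Warnings "-notation-overridden -redundant-canonical-projection".
Lemma Rplus_assoc' : associative Rplus. Proof. move=> *; ring. Qed.
Lemma Rmult_assoc' : associative Rmult. Proof. move=> *; ring. Qed.
HB.instance Definition _ := Monoid.isComLaw.Build R R0 Rplus Rplus_assoc' Rplus_comm Rplus_0_l.
HB.instance Definition _ := Monoid.isComLaw.Build R R1 Rmult Rmult_assoc' Rmult_comm Rmult_1_l.
HB.instance Definition _ := Monoid.isMulLaw.Build R R0 Rmult Rmult_0_l Rmult_0_r.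
HB.instance Definition _ := Monoid.isAddLaw.Build R Rmult Rplus Rmult_plus_distr_r Rmult_plus_distr_l.

Lemma rsum_add n (F G : 'I_n -> R) : rsum (fun i => F i + G i) = rsum F + rsum G.
Proof. by rewrite /rsum big_split. Qed.
Lemma rsum_scal n (F : 'I_n -> R) a : rsum (fun i => a * F i) = a * rsum F.
Proof. by rewrite /rsum big_distrr. Qed.
Lemma rsum_ext n (F G : 'I_n -> R) : (forall i, F i = G i) -> rsum F = rsum G.
Proof. by move=> H; rewrite /rsum; apply: eq_bigr => i _; apply: H. Qed.
Lemma rsum0 n : rsum (fun _ : 'I_n => 0) = 0.
Proof. by rewrite /rsum big1. Qed.
Lemma rsum_pick n (F : 'I_n -> R) j :
  rsum (fun k => (if k == j then 1 else 0) * F k) = F j.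
Proof.
rewrite /rsum (bigD1 j) //= eqxx big1; first by ring.
by move=> k /negbTE ->; ring.
Qed.
Lemma rsum_pick' n (F : 'I_n -> R) j :
  rsum (fun k => F k * (if k == j then 1 else 0)) = F j.
Proof.
rewrite -(rsum_pick F j); apply: rsum_ext => k; ring.
Qed.
Lemma rsum_ge0 n (F : 'I_n -> R) : (forall i, 0 <= F i) -> 0 <= rsum F.
Proof.
move=> H; rewrite /rsum; apply: (big_ind (fun x => 0 <= x)) => //.
- lra.
- move=> x y ??; lra.
Qed.
Lemma rsum_ge_term n (F : 'I_n -> R) j : (forall i, 0 <= F i) -> F j <= rsum F.
Proof.
move=> H; rewrite /rsum (bigD1 j) //=.
rewrite -{1}(Rplus_0_r (F j)); apply: Rplus_le_compat_l.
apply: (big_ind (fun x => 0 <= x)) => //; [lra| move=> x y ??; lra].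
Qed.
Lemma rsum_le n (F G : 'I_n -> R) : (forall i, F i <= G i) -> rsum F <= rsum G.
Proof.
move=> H; rewrite /rsum; apply: (big_ind2 (fun x y => x <= y)) => //.
- lra.
- move=> ????; lra.
Qed.
Lemma rsum_exchange n (F : 'I_n -> 'I_n -> R) :
  rsum (fun i => rsum (fun j => F i j)) = rsum (fun j => rsum (fun i => F i j)).
Proof. by rewrite /rsum exchange_big. Qed.

Lemma dot_ge0 n (x : pt n) : 0 <= dot x x.
Proof. apply: rsum_ge0 => i; nra. Qed.

Lemma coord_le_norm n (x : pt n) i : Rabs (x i) <= norm x.
Proof.
rewrite /norm -sqrt_Rsqr_abs; apply: sqrt_le_1_alt.
rewrite /Rsqr /dot.

have H := @rsum_ge_term n (fun i => x i * x i) i.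
apply: H => k; nra.
Qed.

Lemma rsum_cv n (F : nat -> 'I_n -> R) (L : 'I_n -> R) :
  (forall i, Un_cv (fun k => F k i) (L i)) ->
  Un_cv (fun k => rsum (F k)) (rsum L).
Proof.
move=> H; rewrite /rsum.
elim: (index_enum _) => [|a s IH].
- rewrite big_nil.
  have -> : (fun k => \big[Rplus/0]_(i <- [::]) F k i) = (fun _ => 0).
    by apply: functional_extensionality => k; rewrite big_nil.
  move=> eps Heps; exists 0%nat => k _; rewrite /Rdist Rminus_diag Rabs_R0; lra.
- rewrite big_cons.
  have -> : (fun k => \big[Rplus/0]_(i <- a :: s) F k i) =
            (fun k => F k a + \big[Rplus/0]_(i <- s) F k i).
    by apply: functional_extensionality => k; rewrite big_cons.
  by apply: CV_plus.
Qed.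

Lemma Un_cv_const c : Un_cv (fun _ => c) c.
Proof. move=> eps He; exists 0%nat => k _; rewrite /Rdist Rminus_diag Rabs_R0; lra. Qed.

Definition cvp n (z : nat -> pt n) (l : pt n) := forall i, Un_cv (fun k => z k i) (l i).

Definition rho2 n (y z : pt n) : R := dot (fun k => z k - y k) (fun k => z k - y k).

Lemma pdist_rho2 n (z y : pt n) : pdist z y = sqrt (rho2 y z).
Proof. by []. Qed.

Lemma rho2_cv n (z : nat -> pt n) l (y : pt n) : cvp z l -> Un_cv (fun k => rho2 y (z k)) (rho2 y l).
Proof.
move=> H; apply: (rsum_cv (F := fun k i => (z k i - y i) * (z k i - y i))) => i.
by apply: CV_mult; apply: CV_minus => //; apply: Un_cv_const.
Qed.

Lemma pdist_cv n (z : nat -> pt n) l (y : pt n) : cvp z l -> Un_cv (fun k => pdist (z k) y) (pdist l y).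
Proof.
move=> H; apply: (continuity_seq sqrt (fun k => rho2 y (z k))).
  by apply: continuity_pt_sqrt; apply: dot_ge0.
exact: rho2_cv.
Qed.

Lemma pdist_cv0 n (z : nat -> pt n) (l : pt n) : cvp z l -> Un_cv (fun k => pdist (z k) l) 0.
Proof.
move=> H; have := pdist_cv l H; rewrite /pdist /norm /dot.
have -> : rsum (fun i => (l i - l i) * (l i - l i)) = 0.
  by rewrite -(rsum0 n); apply: rsum_ext => i; ring.
by rewrite sqrt_0.
Qed.

Lemma pdist_ge0 n (x y : pt n) : 0 <= pdist x y.
Proof. exact: sqrt_pos. Qed.

Lemma coord_le_pdist n (x y : pt n) i : Rabs (x i - y i) <= pdist x y.
Proof. exact: (coord_le_norm (fun k => x k - y k)). Qed.

Lemma archi_inv eps : 0 < eps -> exists N : nat, / (INR N + 1) < eps.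
Proof.
move=> He; have [N [HN HN0]] := archimed_cor1 eps He; exists N.
apply: Rle_lt_trans HN; apply: Rinv_le_contravar; last lra.
have := lt_INR _ _ HN0; rewrite /= => H; lra.
Qed.

Lemma inv_cv0 : Un_cv (fun k => / (INR k + 1)) 0.
Proof.
move=> eps He; have [N HN] := archi_inv He; exists N => k Hk.
rewrite /Rdist Rminus_0_r Rabs_right; last first.
  by apply: Rle_ge; apply: Rlt_le; apply: Rinv_0_lt_compat; have := pos_INR k; lra.
apply: Rle_lt_trans HN; apply: Rinv_le_contravar.
  by have := pos_INR N; lra.
by have := le_INR _ _ Hk; lra.
Qed.

Lemma seq_epsdelta n (g : pt n -> R) (U : pt n -> Prop) x :
  (forall z : nat -> pt n, (forall k, U (z k)) -> cvp z x -> Un_cv (fun k => g (z k)) (g x)) ->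
  forall eps, 0 < eps -> exists d, 0 < d /\
    forall y, U y -> pdist y x < d -> Rabs (g y - g x) < eps.
Proof.
move=> H eps He; apply: NNPP => Hn.
have Hk : forall k : nat, exists y, U y /\ pdist y x < / (INR k + 1) /\ ~ Rabs (g y - g x) < eps.
  move=> k; apply: NNPP => Hk; apply: Hn; exists (/ (INR k + 1)); split.
    by apply: Rinv_0_lt_compat; have := pos_INR k; lra.
  move=> y Uy Hy; apply: NNPP => Hg; apply: Hk; by exists y.
pose z k := proj1_sig (constructive_indefinite_description _ (Hk k)).
have Hz : forall k, U (z k) /\ pdist (z k) x < / (INR k + 1) /\ ~ Rabs (g (z k) - g x) < eps.
  by move=> k; rewrite /z; case: constructive_indefinite_description.
have Hc : cvp z x.
  move=> i e Hee; have [N HN] := inv_cv0 Hee; exists N => k Hkn.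
  have := HN k Hkn; rewrite /Rdist Rminus_0_r => HH.
  have H1 := coord_le_pdist (z k) x i; have [_ [HH2 _]] := Hz k.
  have H3 : 0 < / (INR k + 1) by apply: Rinv_0_lt_compat; have := pos_INR k; lra.
  rewrite Rabs_right in HH; last lra.
  rewrite /Rdist; lra.
have := H z (fun k => proj1 (Hz k)) Hc eps He; case=> N HN.
have [_ [_ HH]] := Hz N; apply: HH; exact: HN.
Qed.

Lemma seq_cont_on n (g : pt n -> R) (U : pt n -> Prop) :
  (forall x, U x -> forall z : nat -> pt n, cvp z x -> Un_cv (fun k => g (z k)) (g x)) ->
  cont_on U g.
Proof.
move=> H x Ux; apply: seq_epsdelta => z _; exact: H.
Qed.

Definition incr (phi : nat -> nat) := forall j, (phi j < phi j.+1)%nat.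

Lemma incr_mono phi : incr phi -> forall a b, (a < b)%nat -> (phi a < phi b)%nat.
Proof.
move=> H a; elim=> [|b IH] //.
rewrite ltnS leq_eqVlt => /orP [/eqP -> | /IH Hab]; first exact: H.
exact: (ltn_trans Hab (H b)).
Qed.

Lemma incr_ge phi : incr phi -> forall j, (j <= phi j)%nat.
Proof.
move=> H; elim=> [|j IH] //; exact: (leq_ltn_trans IH (H j)).
Qed.

Lemma incr_comp phi psi : incr phi -> incr psi -> incr (fun j => phi (psi j)).
Proof. move=> H1 H2 j; apply: incr_mono => //; exact: H2. Qed.

Lemma Un_cv_sub (a : nat -> R) l phi : incr phi -> Un_cv a l -> Un_cv (fun j => a (phi j)) l.
Proof.
move=> Hi H eps He; have [N HN] := H eps He; exists N => j Hj; apply: HN.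
apply/ssrnat.leP; apply: leq_trans (incr_ge Hi j); exact/ssrnat.leP.
Qed.

Lemma Rabs_le_inv' a B : Rabs a <= B -> -B <= a <= B.
Proof. move=> H; split_Rabs; lra. Qed.

Lemma bw1 (a : nat -> R) B : (forall k, Rabs (a k) <= B) ->
  exists phi, incr phi /\ exists l, Un_cv (fun j => a (phi j)) l.
Proof.
move=> HB.
have [l Hl] := Bolzano_Weierstrass a (fun c => -B <= c <= B) (compact_P3 (-B) B)
  (fun k => Rabs_le_inv' (HB k)).
have Hp : forall (N k : nat), exists p, (N <= p)%nat /\ Rabs (a p - l) < / (INR k + 1).
  move=> N k.
  have Hd : 0 < / (INR k + 1) by apply: Rinv_0_lt_compat; have := pos_INR k; lra.
  have [p [Hp1 Hp2]] := Hl (disc l (mkposreal _ Hd)) N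
    (ex_intro _ (mkposreal _ Hd) (fun y Hy => Hy)).
  by exists p; split => //; apply/ssrnat.leP.
pose pick N k := proj1_sig (constructive_indefinite_description _ (Hp N k)).
have Hpick : forall N k, (N <= pick N k)%nat /\ Rabs (a (pick N k) - l) < / (INR k + 1).
  by move=> N k; rewrite /pick; case: constructive_indefinite_description.
pose phi := fix phi (j : nat) : nat := match j with O => pick O O | S jj => pick (S (phi jj)) (S jj) end.
exists phi; split.
  by move=> j /=; have [H _] := Hpick (phi j).+1 j.+1.
exists l => eps He; have [N HN] := archi_inv He; exists N => j Hj.
have Hj' : Rabs (a (phi j) - l) < / (INR j + 1).
  by case: j Hj => [|j] Hj /=; [exact: (proj2 (Hpick O O)) | exact: (proj2 (Hpick _ _))].
rewrite /Rdist; apply: Rlt_le_trans Hj' _; apply: Rle_trans (Rlt_le _ _ HN).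
apply: Rinv_le_contravar; first by have := pos_INR N; lra.
have := le_INR _ _ Hj; lra.
Qed.

Lemma bwn n (z : nat -> pt n) B : (forall k i, Rabs (z k i) <= B) ->
  exists phi, incr phi /\ exists l, cvp (fun j => z (phi j)) l.
Proof.
move=> HB.
have Hk : forall k, (k <= n)%nat -> exists phi, incr phi /\ exists l : pt n,
    forall i : 'I_n, (i < k)%nat -> Un_cv (fun j => z (phi j) i) (l i).
  elim=> [|k IH] Hkn.
    exists (fun j : nat => j); split; first by move=> j.
    by exists (fun _ => 0) => i.
  have [phi [Hphi [l Hl]]] := IH (ltnW Hkn).
  pose i0 : 'I_n := Ordinal Hkn.
  have [psi [Hpsi [l0 Hl0]]] := bw1 (a := fun j => z (phi j) i0) (fun j => HB (phi j) i0).
  exists (fun j => phi (psi j)); split; first exact: incr_comp.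
  exists (fun i => if i == i0 then l0 else l i) => i Hi.
  case: eqP => [->|Hne]; first exact: Hl0.
  apply: (Un_cv_sub (a := fun j => z (phi j) i)) => //; apply: Hl.
  rewrite ltnS leq_eqVlt in Hi; case/orP: Hi => // /eqP Hi.
  by exfalso; apply: Hne; apply: val_inj.
have [phi [Hphi [l Hl]]] := Hk n (leqnn n).
by exists phi; split => //; exists l => i; apply: Hl.
Qed.

Lemma pdist_refl n (x : pt n) : pdist x x = 0.
Proof.
rewrite /pdist /norm /dot.
have -> : rsum (fun i => (x i - x i) * (x i - x i)) = 0.
  by rewrite -(rsum0 n); apply: rsum_ext => i; ring.
exact: sqrt_0.
Qed.

Lemma ball_subseq n (x : pt n) rho (w : nat -> pt n) : (forall k, pdist (w k) x <= rho) ->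
  exists phi, incr phi /\ exists l, pdist l x <= rho /\
    Un_cv (fun j => pdist (w (phi j)) l) 0.
Proof.
move=> Hw.
have HB : forall k i, Rabs (w k i) <= rho + norm x.
  move=> k i; have H1 := coord_le_pdist (w k) x i; have H2 := coord_le_norm x i.
  have := Rabs_triang (w k i - x i) (x i).
  have -> : w k i - x i + x i = w k i by ring.
  have := Hw k; lra.
have [phi [Hphi [l Hl]]] := bwn HB.
exists phi; split => //; exists l; split; last exact: pdist_cv0.
apply: (Rle_cv_lim (Un := fun j => pdist (w (phi j)) x) (Vn := fun _ => rho)).
- by move=> j; apply: Hw.
- exact: pdist_cv.
- exact: Un_cv_const.
Qed.

Lemma Rplus_minus_l' a b : a + (b - a) = b. Proof. ring. Qed.

Lemma usc_max n (g : pt n -> R) (x : pt n) rho : 0 <= rho ->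
  (forall w, pdist w x <= rho -> forall eps, 0 < eps -> exists d, 0 < d /\
     forall y, pdist y x <= rho -> pdist y w < d -> g y < g w + eps) ->
  exists z, pdist z x <= rho /\ forall w, pdist w x <= rho -> g w <= g z.
Proof.
move=> Hrho Husc.
have Kx : pdist x x <= rho by rewrite pdist_refl.
case: (classic (exists Bd, forall w, pdist w x <= rho -> g w <= Bd)) => [[Bd HBd]|Hnb].
- pose E y := exists w, pdist w x <= rho /\ y = g w.
  have HE1 : bound E.
    by exists Bd => y [w [Hw ->]]; apply: HBd.
  have [S [HS1 HS2]] := completeness E HE1 (ex_intro _ (g x) (ex_intro _ x (conj Kx erefl))).
  have Hk : forall k : nat, exists w, pdist w x <= rho /\ S - / (INR k + 1) < g w.
    move=> k; apply: NNPP => Hn.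
    have Hd : 0 < / (INR k + 1) by apply: Rinv_0_lt_compat; have := pos_INR k; lra.
    have : S <= S - / (INR k + 1).
      apply: HS2 => y [w [Hw ->]]; apply: Rnot_lt_le => Hlt; apply: Hn; by exists w.
    lra.
  pose w k := proj1_sig (constructive_indefinite_description _ (Hk k)).
  have Hw : forall k, pdist (w k) x <= rho /\ S - / (INR k + 1) < g (w k).
    by move=> k; rewrite /w; case: constructive_indefinite_description.
  have [phi [Hphi [l [Hl Hcv]]]] := ball_subseq (fun k => proj1 (Hw k)).
  exists l; split => // w0 Hw0.
  suff : S <= g l by have := HS1 _ (ex_intro _ w0 (conj Hw0 erefl)); lra.
  apply: Rnot_lt_le => Hlt.
  have He : 0 < (S - g l) / 2 by lra.
  have [d [Hd Hdd]] := Husc l Hl _ He.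
  have [N1 HN1] := Hcv d Hd.
  have [N2 HN2] := archi_inv He.
  pose j := maxn N1 N2.
  have Hj1 : (j >= N1)%coq_nat by apply/ssrnat.leP; apply: leq_maxl.
  have Hj2 : (N2 <= j)%nat by apply: leq_maxr.
  have := HN1 j Hj1; rewrite /Rdist Rminus_0_r Rabs_right; last exact/Rle_ge/pdist_ge0.
  move=> /(Hdd _ (proj1 (Hw _))) H1.
  have [_ H2] := Hw (phi j).
  have H3 : / (INR (phi j) + 1) <= / (INR N2 + 1).
    apply: Rinv_le_contravar; first by have := pos_INR N2; lra.
    have := le_INR _ _ (ssrnat.leP (leq_trans Hj2 (incr_ge Hphi j))); lra.
  lra.
- have Hk : forall k : nat, exists w, pdist w x <= rho /\ INR k < g w.
    move=> k; apply: NNPP => Hn; apply: Hnb; exists (INR k) => w Hw.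
    apply: Rnot_lt_le => Hlt; apply: Hn; by exists w.
  pose w k := proj1_sig (constructive_indefinite_description _ (Hk k)).
  have Hw : forall k, pdist (w k) x <= rho /\ INR k < g (w k).
    by move=> k; rewrite /w; case: constructive_indefinite_description.
  have [phi [Hphi [l [Hl Hcv]]]] := ball_subseq (fun k => proj1 (Hw k)).
  exfalso.
  have [d [Hd Hdd]] := Husc l Hl 1 Rlt_0_1.
  have [N1 HN1] := Hcv d Hd.
  have [N2 HN2] := INR_unbounded (g l + 1).
  pose j := maxn N1 N2.
  have Hj1 : (j >= N1)%coq_nat by apply/ssrnat.leP; apply: leq_maxl.
  have Hj2 : (N2 <= j)%nat by apply: leq_maxr.
  have := HN1 j Hj1; rewrite /Rdist Rminus_0_r Rabs_right; last exact/Rle_ge/pdist_ge0.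
  move=> /(Hdd _ (proj1 (Hw _))) H1.
  have [_ H2] := Hw (phi j).
  have := le_INR _ _ (ssrnat.leP (leq_trans Hj2 (incr_ge Hphi j))).
  lra.
Qed.

Lemma dpl_conv f g x l l' : derivable_pt_lim f x l -> (forall t, f t = g t) -> l = l' ->
  derivable_pt_lim g x l'.
Proof.
move=> H Hfg <-; have -> : g = f by apply: functional_extensionality => t; rewrite Hfg.
exact: H.
Qed.

Lemma dpl_local f g x l : derivable_pt_lim f x l ->
  (exists d, 0 < d /\ forall y, Rabs (y - x) < d -> f y = g y) -> derivable_pt_lim g x l.
Proof.
move=> H [d [Hd Hfg]] eps He; have [del Hdel] := H eps He.
have Hm : 0 < Rmin del d by apply: Rmin_pos => //; exact: cond_pos.
exists (mkposreal _ Hm) => h Hh Hhd /=.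
have Hh1 : Rabs h < del by apply: Rlt_le_trans Hhd _; apply: Rmin_l.
have Hh2 : Rabs h < d by apply: Rlt_le_trans Hhd _; apply: Rmin_r.
rewrite -!Hfg; first exact: Hdel.
- by rewrite Rminus_diag Rabs_R0.
- by have -> : x + h - x = h by ring.
Qed.

Lemma cpt_elim f x : continuity_pt f x -> forall eps, 0 < eps -> exists d, 0 < d /\
  forall y, Rabs (y - x) < d -> Rabs (f y - f x) < eps.
Proof.
move=> H eps He; have [d [Hd Hdd]] := H eps He; exists d; split => // y Hy.
case: (Req_dec x y) => [<-|Hne]; first by rewrite Rminus_diag Rabs_R0.
exact: (Hdd y (conj (conj I Hne) Hy)).
Qed.

Lemma cpt_intro f x : (forall eps, 0 < eps -> exists d, 0 < d /\
  forall y, Rabs (y - x) < d -> Rabs (f y - f x) < eps) -> continuity_pt f x.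
Proof.
move=> H eps He; have [d [Hd Hdd]] := H eps He; exists d; split => // y [_ Hy].
exact: Hdd.
Qed.

Lemma cpt_local f g x : continuity_pt f x ->
  (exists d, 0 < d /\ forall y, Rabs (y - x) < d -> f y = g y) -> continuity_pt g x.
Proof.
move=> H [d [Hd Hfg]]; apply: cpt_intro => eps He.
have [del [Hdel Hdd]] := cpt_elim H He.
exists (Rmin del d); split; first exact: Rmin_pos.
move=> y Hy; have Hy1 : Rabs (y - x) < del by apply: Rlt_le_trans Hy _; apply: Rmin_l.
have Hy2 : Rabs (y - x) < d by apply: Rlt_le_trans Hy _; apply: Rmin_r.
rewrite -!Hfg //; first exact: Hdd.
by rewrite Rminus_diag Rabs_R0.
Qed.

Definition glue (a : R) (f g : R -> R) (s : R) := if Rle_dec s a then f s else g s.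

Lemma glue_d (f g f' g' : R -> R) a t :
  (forall s, s <= a -> derivable_pt_lim f s (f' s)) ->
  (forall s, a <= s -> derivable_pt_lim g s (g' s)) -> f a = g a -> f' a = g' a ->
  derivable_pt_lim (glue a f g) t (glue a f' g' t).
Proof.
move=> Hf Hg Ha Ha'; rewrite /glue.
case: (Rtotal_order t a) => [Hlt|[Heq|Hgt]].
- destruct (Rle_dec t a) as [Hq0|]; last lra.
  apply: (dpl_local (Hf t (Rlt_le _ _ Hlt))); exists (a - t); split; first lra.
  move=> y Hy; destruct (Rle_dec y a) as [|Hn] => //; exfalso; apply: Hn.
  have := Rle_abs (y - t); lra.
- subst t; destruct (Rle_dec a a) as [Hq0|]; last lra.
  move=> eps He; have [d1 Hd1] := Hf a (Rle_refl a) eps He.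
  have [d2 Hd2] := Hg a (Rle_refl a) eps He.
  have Hm : 0 < Rmin d1 d2 by apply: Rmin_pos; exact: cond_pos.
  exists (mkposreal _ Hm) => h Hh Hhd /=.
  have Hh1 : Rabs h < d1 by apply: Rlt_le_trans Hhd _; apply: Rmin_l.
  have Hh2 : Rabs h < d2 by apply: Rlt_le_trans Hhd _; apply: Rmin_r.
  destruct (Rle_dec a a) as [Hq1|]; last lra.
  destruct (Rle_dec (a + h) a) as [Hle|Hnle]; rewrite /=; first exact: Hd1.
  rewrite Ha Ha'; exact: Hd2.
- destruct (Rle_dec t a) as [|Hq0]; first lra.
  apply: (dpl_local (Hg t (Rlt_le _ _ Hgt))); exists (t - a); split; first lra.
  move=> y Hy; destruct (Rle_dec y a) as [|Hn] => //; exfalso.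
  have := Rle_abs (- (y - t)); rewrite Rabs_Ropp; lra.
Qed.

Lemma glue_c (f g : R -> R) a t :
  (forall s, s <= a -> continuity_pt f s) ->
  (forall s, a <= s -> continuity_pt g s) -> f a = g a ->
  continuity_pt (glue a f g) t.
Proof.
move=> Hf Hg Ha; rewrite /glue.
case: (Rtotal_order t a) => [Hlt|[Heq|Hgt]].
- apply: (cpt_local (Hf t (Rlt_le _ _ Hlt))); exists (a - t); split; first lra.
  move=> y Hy; destruct (Rle_dec y a) as [|Hn] => //; exfalso; apply: Hn.
  have := Rle_abs (y - t); lra.
- subst t; apply: cpt_intro => eps He.
  have [d1 [Hd1 Hdd1]] := cpt_elim (Hf a (Rle_refl a)) He.
  have [d2 [Hd2 Hdd2]] := cpt_elim (Hg a (Rle_refl a)) He.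
  exists (Rmin d1 d2); split; first exact: Rmin_pos.
  move=> y Hy; have Hy1 : Rabs (y - a) < d1 by apply: Rlt_le_trans Hy _; apply: Rmin_l.
  have Hy2 : Rabs (y - a) < d2 by apply: Rlt_le_trans Hy _; apply: Rmin_r.
  destruct (Rle_dec a a) as [Hq0|]; last lra.
  destruct (Rle_dec y a) as [Hq1|Hq1]; rewrite /=; first exact: Hdd1.
  rewrite Ha; exact: Hdd2.
- apply: (cpt_local (Hg t (Rlt_le _ _ Hgt))); exists (t - a); split; first lra.
  move=> y Hy; destruct (Rle_dec y a) as [|Hn] => //; exfalso.
  have := Rle_abs (- (y - t)); rewrite Rabs_Ropp; lra.
Qed.

Lemma d_quad A B C T s : derivable_pt_lim (fun s => A + B * (s - T) + C * ((s - T) * (s - T))) s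
  (B + 2 * C * (s - T)).
Proof.
move=> eps He.
have Hp : 0 < eps / (Rabs C + 1) by apply: Rdiv_lt_0_compat => //; have := Rabs_pos C; lra.
exists (mkposreal _ Hp) => h Hh /= Hhd.
have -> : (A + B * (s + h - T) + C * ((s + h - T) * (s + h - T)) -
           (A + B * (s - T) + C * ((s - T) * (s - T)))) / h - (B + 2 * C * (s - T)) = C * h.
  by field.
rewrite Rabs_mult.
have HC := Rabs_pos C.
have : Rabs h * (Rabs C + 1) < eps.
  have Hk : 0 < Rabs C + 1 by lra.
  have := Rmult_lt_compat_r (Rabs C + 1) _ _ Hk Hhd.
  have -> : eps / (Rabs C + 1) * (Rabs C + 1) = eps by field; lra.
  done.
have := Rabs_pos h; nra.
Qed.

Lemma d_rpw Rr p t : t < Rr * Rr ->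
  derivable_pt_lim (fun s => Rpower (Rr * Rr - s) p) t (- (p * Rpower (Rr * Rr - t) (p - 1))).
Proof.
move=> Ht.
have Hin : derivable_pt_lim (fun s => Rr * Rr - s) t (-1).
  apply: (dpl_conv (d_quad (Rr * Rr - t) (-1) 0 t t)) => [s|]; ring.
have := derivable_pt_lim_comp _ (Rpower^~ p) t _ _ Hin (derivable_pt_lim_power (Rr * Rr - t) p ltac:(lra)).
move=> H; apply: (dpl_conv H) => //; ring.
Qed.

Definition psi0 al Rr m t := al * Rpower Rr m * Rpower (Rr * Rr - t) (- m).
Definition psi1 al Rr m t := m * al * Rpower Rr m * Rpower (Rr * Rr - t) (- m - 1).
Definition psi2 al Rr m t := m * (m + 1) * al * Rpower Rr m * Rpower (Rr * Rr - t) (- m - 2).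

Lemma d_psi0 al Rr m t : t < Rr * Rr -> derivable_pt_lim (psi0 al Rr m) t (psi1 al Rr m t).
Proof.
move=> Ht; have := derivable_pt_lim_scal _ (al * Rpower Rr m) _ _ (d_rpw (- m) Ht).
move=> H; apply: (dpl_conv H) => [s|]; rewrite /mult_real_fct /psi0 /psi1 //.
ring.
Qed.

Lemma d_psi1 al Rr m t : t < Rr * Rr -> derivable_pt_lim (psi1 al Rr m) t (psi2 al Rr m t).
Proof.
move=> Ht; have := derivable_pt_lim_scal _ (m * al * Rpower Rr m) _ _ (d_rpw (- m - 1) Ht).
move=> H; apply: (dpl_conv H) => [s|]; rewrite /mult_real_fct /psi1 /psi2 //.
have -> : - m - 1 - 1 = - m - 2 by ring.
ring.
Qed.

Lemma c_psi2 al Rr m t : t < Rr * Rr -> continuity_pt (psi2 al Rr m) t.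
Proof.
move=> Ht; apply: derivable_continuous_pt.
exists (- (m * (m + 1) * al * Rpower Rr m) * ((- m - 2) * Rpower (Rr * Rr - t) (- m - 2 - 1))).
have := derivable_pt_lim_scal _ (m * (m + 1) * al * Rpower Rr m) _ _ (d_rpw (- m - 2) Ht).
move=> H; apply: (dpl_conv H) => [s|]; rewrite /mult_real_fct /psi2 //; ring.
Qed.

Section Hdef.
Variables (al Rr m T : R).
Definition Hq t := psi0 al Rr m T + psi1 al Rr m T * (t - T) + (psi2 al Rr m T / 2) * ((t - T) * (t - T)).
Definition H1q t := psi1 al Rr m T + psi2 al Rr m T * (t - T) + 0 * ((t - T) * (t - T)).
Definition H2q (t : R) := psi2 al Rr m T.
Definition H0f := glue T (psi0 al Rr m) Hq.
Definition H1f := glue T (psi1 al Rr m) H1q.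
Definition H2f := glue T (psi2 al Rr m) H2q.

Hypothesis HT : T < Rr * Rr.

Lemma dH0 t : derivable_pt_lim H0f t (H1f t).
Proof.
apply: glue_d.
- move=> s Hs; apply: d_psi0; lra.
- move=> s _; apply: (dpl_conv (d_quad (psi0 al Rr m T) (psi1 al Rr m T) (psi2 al Rr m T / 2) T s)).
    by move=> u; rewrite /Hq.
  rewrite /H1q; field.
- rewrite /Hq; ring.
- rewrite /H1q; ring.
Qed.

Lemma dH1 t : derivable_pt_lim H1f t (H2f t).
Proof.
apply: glue_d.
- move=> s Hs; apply: d_psi1; lra.
- move=> s _; apply: (dpl_conv (d_quad (psi1 al Rr m T) (psi2 al Rr m T) 0 T s)).
    by move=> u; rewrite /H1q.
  rewrite /H2q; ring.
- rewrite /H1q; ring.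
- by [].
Qed.

Lemma cH2 t : continuity_pt H2f t.
Proof.
apply: glue_c => //.
- move=> s Hs; apply: c_psi2; lra.
- move=> s _; apply: continuity_pt_const => a b //.
Qed.
End Hdef.

Lemma rho2_line n (y z : pt n) j t :
  rho2 y (ptadd z (ptscal t (e_ j))) = rho2 y z + (2 * (z j - y j)) * (t - 0) + 1 * ((t - 0) * (t - 0)).
Proof.
rewrite /rho2 /dot /ptadd /ptscal /e_.
rewrite (rsum_ext (G := fun k => (z k - y k) * (z k - y k) +
    (if k == j then 1 else 0) * (2 * (z k - y k) * t + t * t))); last first.
  by move=> k; case: (k == j); ring.
rewrite rsum_add rsum_pick; ring.
Qed.

Lemma d_compH (K K' : R -> R) A B :
  (forall u, derivable_pt_lim K u (K' u)) ->
  derivable_pt_lim (fun s => K (A + B * (s - 0) + 1 * ((s - 0) * (s - 0)))) 0 (K' A * B).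
Proof.
move=> HK.
have := derivable_pt_lim_comp _ K 0 _ _ (d_quad A B 1 0 0) (HK _).
move=> H; apply: (dpl_conv H) => // .
have -> : A + B * (0 - 0) + 1 * ((0 - 0) * (0 - 0)) = A by ring.
ring.
Qed.

Section Radial.
Variables (n : nat) (H H1 H2 : R -> R) (c : R) (y : pt n).
Hypotheses (dH : forall t, derivable_pt_lim H t (H1 t))
           (dH1 : forall t, derivable_pt_lim H1 t (H2 t))
           (cH2 : forall t, continuity_pt H2 t).

Definition rphi (z : pt n) := c * H (rho2 y z).
Definition rDphi (i : 'I_n) (z : pt n) := c * H1 (rho2 y z) * (2 * (z i - y i)).
Definition rD2phi (i j : 'I_n) (z : pt n) :=
  c * (H2 (rho2 y z) * (2 * (z j - y j)) * (2 * (z i - y i)) +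
       H1 (rho2 y z) * (2 * (if i == j then 1 else 0))).

Lemma cH t : continuity_pt H t.
Proof. apply: derivable_continuous_pt; exists (H1 t); exact: dH. Qed.
Lemma cH1 t : continuity_pt H1 t.
Proof. apply: derivable_continuous_pt; exists (H2 t); exact: dH1. Qed.

Lemma rphi_partial i z : partial_is rphi i z (rDphi i z).
Proof.
rewrite /partial_is /rphi.
have := derivable_pt_lim_scal _ c _ _ (d_compH (rho2 y z) (2 * (z i - y i)) dH).
move=> Hd; apply: (dpl_conv Hd) => [t|]; rewrite /mult_real_fct.
  by rewrite rho2_line.
rewrite /rDphi; ring.
Qed.

Lemma rDphi_partial i j z : partial_is (rDphi i) j z (rD2phi i j z).
Proof.
rewrite /partial_is /rDphi.
have Hd1 := derivable_pt_lim_scal _ c _ _ (d_compH (rho2 y z) (2 * (z j - y j)) dH1).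
have Hd2 := d_quad (2 * (z i - y i)) (2 * (if i == j then 1 else 0)) 0 0 0.
have := derivable_pt_lim_mult _ _ _ _ _ Hd1 Hd2.
move=> Hd; apply: (dpl_conv Hd) => [t|].
  rewrite /mult_fct /mult_real_fct rho2_line /ptadd /ptscal /e_; ring.
rewrite /mult_fct /mult_real_fct /rD2phi.
have -> : rho2 y z + 2 * (z j - y j) * (0 - 0) + 1 * ((0 - 0) * (0 - 0)) = rho2 y z by ring.
ring.
Qed.

Lemma rho2_cont (U : pt n -> Prop) : forall x, U x -> forall z : nat -> pt n, cvp z x ->
  Un_cv (fun k => rho2 y (z k)) (rho2 y x).
Proof. move=> x _ z Hz; exact: rho2_cv. Qed.

Lemma rphi_C2 (U : pt n -> Prop) : C2_on U rphi rDphi rD2phi.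
Proof.
split; [|split; [|split; [|split]]].
- apply: seq_cont_on => x _ z Hz; rewrite /rphi.
  apply: CV_mult; first exact: Un_cv_const.
  apply: continuity_seq; [exact: cH | exact: rho2_cv].
- move=> i x _; exact: rphi_partial.
- move=> i j x _; exact: rDphi_partial.
- move=> i; apply: seq_cont_on => x _ z Hz; rewrite /rDphi.
  apply: CV_mult; first apply: CV_mult; first exact: Un_cv_const.
  + apply: continuity_seq; [exact: cH1 | exact: rho2_cv].
  + apply: CV_mult; first exact: Un_cv_const.
    apply: CV_minus; [exact: Hz | exact: Un_cv_const].
- move=> i j; apply: seq_cont_on => x _ z Hz; rewrite /rD2phi.
  apply: CV_mult; first exact: Un_cv_const.
  apply: CV_plus; apply: CV_mult.
  + apply: CV_mult.
    * apply: continuity_seq; [exact: cH2 | exact: rho2_cv].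
    * apply: CV_mult; first exact: Un_cv_const.
      apply: CV_minus; [exact: Hz | exact: Un_cv_const].
  + apply: CV_mult; first exact: Un_cv_const.
    apply: CV_minus; [exact: Hz | exact: Un_cv_const].
  + apply: continuity_seq; [exact: cH1 | exact: rho2_cv].
  + exact: Un_cv_const.
Qed.
End Radial.

Lemma mmul_diag n (Q : mat n) (mu : pt n) i j :
  mmul (mmul Q (mdiag mu)) (mtr Q) i j = rsum (fun l => Q i l * mu l * Q j l).
Proof.
rewrite /mmul /mtr; apply: rsum_ext => l.
rewrite (rsum_ext (G := fun k => (if k == l then 1 else 0) * (Q i k * mu k))); last first.
  by move=> k; rewrite /mdiag; case: (k == l); ring.
by rewrite rsum_pick.
Qed.

Lemma eig_scalar n (kap : R) (mu : pt n) :
  is_eigvals (fun i j => kap * mid i j) mu -> forall a, mu a = kap.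
Proof.
move=> [Q [HQ HM]] a.
have HQ' : forall a l, rsum (fun i => Q i a * Q i l) = mid a l.
  move=> b l; have := congr1 (fun M => M b l) HQ; rewrite /mmul /mtr /= => <- //.
pose S (M : mat n) := rsum (fun i => rsum (fun j => Q i a * M i j * Q j a)).
have E1 : S (fun i j => kap * mid i j) = kap.
  rewrite /S (rsum_ext (G := fun i => kap * (Q i a * Q i a))); last first.
    move=> i; rewrite (rsum_ext (G := fun j => (if j == i then 1 else 0) * (kap * (Q i a * Q j a)))).
      by rewrite rsum_pick.
    by move=> j; rewrite /mid eq_sym; case: (i == j); ring.
  rewrite rsum_scal HQ' /mid eqxx; ring.
have E2 : S (mmul (mmul Q (mdiag mu)) (mtr Q)) = mu a.
  rewrite /S.
  rewrite (rsum_ext (G := fun i => rsum (fun l => Q i a * Q i l * (mu l * mid l a)))); last first.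
    move=> i.
    rewrite (rsum_ext (G := fun j => rsum (fun l => Q i a * Q i l * mu l * (Q j l * Q j a)))); last first.
      move=> j; rewrite mmul_diag.
      rewrite (rsum_ext (F := fun l => Q i a * Q i l * mu l * (Q j l * Q j a))
                        (G := fun l => (Q i a * Q j a) * (Q i l * mu l * Q j l))); last by move=> l; ring.
      rewrite rsum_scal; ring.
    rewrite rsum_exchange; apply: rsum_ext => l.
    rewrite rsum_scal HQ'; ring.
  rewrite rsum_exchange.
  rewrite (rsum_ext (G := fun l => (if l == a then 1 else 0) * mu l)); last first.
    move=> l; rewrite (rsum_ext (G := fun i => (mu l * mid l a) * (Q i a * Q i l))); last first.
      by move=> i; ring.
    rewrite rsum_scal HQ' /mid [a == l]eq_sym; case: (l == a) => /=; ring.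
  by rewrite rsum_pick.
by rewrite -E2 -HM E1.
Qed.

Lemma Rpower_pos x p : 0 < Rpower x p.
Proof. exact: exp_pos. Qed.

Lemma Rpower_m1 x : 0 < x -> Rpower x (-1) = / x.
Proof. by move=> Hx; rewrite Rpower_Ropp Rpower_1. Qed.

Lemma Rpower_2 x : 0 < x -> Rpower x 2 = x * x.
Proof.
move=> Hx; have -> : (2 : R) = 1 + 1 by ring.
by rewrite Rpower_plus Rpower_1.
Qed.

Lemma Rpower_m2 x : 0 < x -> Rpower x (-2) = / (x * x).
Proof. by move=> Hx; rewrite Rpower_Ropp Rpower_2. Qed.

Lemma H0f_in al Rr m T t : t <= T -> H0f al Rr m T t = psi0 al Rr m t.
Proof. by move=> Ht; rewrite /H0f /glue; destruct (Rle_dec t T). Qed.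
Lemma H1f_in al Rr m T t : t <= T -> H1f al Rr m T t = psi1 al Rr m t.
Proof. by move=> Ht; rewrite /H1f /glue; destruct (Rle_dec t T). Qed.
Lemma H2f_in al Rr m T t : t <= T -> H2f al Rr m T t = psi2 al Rr m t.
Proof. by move=> Ht; rewrite /H2f /glue; destruct (Rle_dec t T). Qed.

Lemma negA_radial n (al Rr c T : R) (y z : pt n) : (3 <= n)%nat -> 0 < al -> 0 < Rr -> 0 < c ->
  T < Rr * Rr -> rho2 y z <= T ->
  negA (rphi (H0f al Rr ((INR n - 2) / 2) T) c y)
       (rDphi (H1f al Rr ((INR n - 2) / 2) T) c y)
       (rD2phi (H1f al Rr ((INR n - 2) / 2) T) (H2f al Rr ((INR n - 2) / 2) T) c y) z
  = fun i j => 2 * Rpower (c * al) (- (2 / ((INR n - 2) / 2))) * mid i j.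
Proof.
move=> Hn Hal HR Hc HT Ht.
have HN : 3 <= INR n.
  have := le_INR 3 n (ssrnat.leP Hn).
  have -> : INR 3 = 3 by simpl; ring.
  done.
set m := (INR n - 2) / 2.
have Hm : 0 < m by rewrite /m; lra.
apply: functional_extensionality => i; apply: functional_extensionality => j.
rewrite /negA /conf_hess /rphi /rDphi /rD2phi.
rewrite H0f_in // H1f_in // H2f_in //.
set t := rho2 y z.
have Hdot : dot (fun k => c * psi1 al Rr m t * (2 * (z k - y k)))
                (fun k => c * psi1 al Rr m t * (2 * (z k - y k))) =
            4 * c * c * psi1 al Rr m t * psi1 al Rr m t * t.
  rewrite /dot (rsum_ext (G := fun k => (4 * c * c * psi1 al Rr m t * psi1 al Rr m t) *
                                 ((z k - y k) * (z k - y k)))); last by move=> k; ring.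
  by rewrite rsum_scal.
rewrite Hdot.
have Hw : 0 < Rr * Rr - t by rewrite /t; lra.
set w := Rr * Rr - t.
have Ht' : t = Rr * Rr - w by rewrite /w; ring.
rewrite /psi0 /psi1 /psi2 -/w.
have E1 : Rpower w (- m - 1) = Rpower w (- m) * / w.
  by rewrite -Rpower_m1 // -Rpower_plus; congr Rpower; ring.
have E2 : Rpower w (- m - 2) = Rpower w (- m) * / (w * w).
  by rewrite -Rpower_m2 // -Rpower_plus; congr Rpower; ring.
rewrite E1 E2.
set A := Rpower Rr m.
set P := Rpower w (- m).
have HA : 0 < A by apply: Rpower_pos.
have HP : 0 < P by apply: Rpower_pos.
set u0 := c * (al * A * P).
have Hu0 : 0 < u0 by rewrite /u0; apply: Rmult_lt_0_compat => //; apply: Rmult_lt_0_compat => //; nra.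
set K := Rpower (c * al) (- (2 / m)).
have HX : Rpower u0 (- ((INR n + 2) / (INR n - 2))) = / u0 * (K * (w * w) / (Rr * Rr)).
  have -> : - ((INR n + 2) / (INR n - 2)) = -1 + - (2 / m) by rewrite /m; field; lra.
  rewrite Rpower_plus Rpower_m1 //; congr Rmult.
  have -> : u0 = (c * al) * A * P by rewrite /u0; ring.
  rewrite -!Rpower_mult_distr //; try (repeat apply: Rmult_lt_0_compat; lra).
  rewrite /A /P !Rpower_mult.
  have -> : m * - (2 / m) = -2 by field; lra.
  have -> : - m * - (2 / m) = 2 by field; lra.
  rewrite Rpower_m2 // Rpower_2 //; rewrite /K -Rpower_mult_distr //; field; lra.
have HY : Rpower u0 (- (2 * INR n / (INR n - 2))) = / u0 * (K * (w * w) / (Rr * Rr)) * / u0.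
  have -> : - (2 * INR n / (INR n - 2)) = - ((INR n + 2) / (INR n - 2)) + -1 by field; lra.
  by rewrite Rpower_plus HX Rpower_m1.
rewrite HX HY Ht'.
have HIN : INR n = 2 * m + 2 by rewrite /m; field.
rewrite HIN /u0.
rewrite /mid; case: (i == j) => /=; field; repeat split; try lra.
Qed.

Lemma Rpower_lt_base a b p : 0 < a -> a < b -> 0 < p -> Rpower a p < Rpower b p.
Proof.
move=> Ha Hab Hp; rewrite /Rpower; apply: exp_increasing.
have := ln_increasing _ _ Ha Hab; nra.
Qed.

Lemma Rpower_lt_base_neg a b p : 0 < a -> a < b -> p < 0 -> Rpower b p < Rpower a p.
Proof.
move=> Ha Hab Hp; rewrite /Rpower; apply: exp_increasing.
have := ln_increasing _ _ Ha Hab; nra.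
Qed.

Lemma Rpower_gt1 x p : 1 < x -> 0 < p -> 1 < Rpower x p.
Proof.
move=> Hx Hp; rewrite /Rpower -exp_0; apply: exp_increasing.
have := ln_increasing 1 x Rlt_0_1 Hx; rewrite ln_1; nra.
Qed.

Lemma Rpower_inv_base x p : 0 < x -> Rpower (/ x) p = Rpower x (- p).
Proof. move=> Hx; rewrite /Rpower ln_Rinv //; congr exp; ring. Qed.

Lemma Rpower_opp_mul x p : 0 < x -> Rpower x p * Rpower x (- p) = 1.
Proof. move=> Hx; rewrite -Rpower_plus Rplus_opp_r; exact: Rpower_O. Qed.

Lemma rho2_ge0 n (y z : pt n) : 0 <= rho2 y z.
Proof. exact: dot_ge0. Qed.

Lemma pdist_sq n (z y : pt n) : pdist z y * pdist z y = rho2 y z.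
Proof. by rewrite pdist_rho2 sqrt_sqrt //; apply: rho2_ge0. Qed.

Lemma rho2_le n (z y : pt n) r : 0 <= r -> pdist z y <= r -> rho2 y z <= r * r.
Proof.
move=> Hr H; rewrite -pdist_sq; have := pdist_ge0 z y; nra.
Qed.

Lemma pdist_line n (w : pt n) k t : pdist (ptadd w (ptscal t (e_ k))) w = Rabs t.
Proof.
rewrite pdist_rho2 rho2_line.
have -> : rho2 w w = 0.
  rewrite /rho2 /dot -(rsum0 n); apply: rsum_ext => i; ring.
rewrite -sqrt_Rsqr_abs /Rsqr; congr sqrt; ring.
Qed.

Lemma pdist_cont n (x z : pt n) eps : 0 < eps -> exists d, 0 < d /\
  forall y, pdist y z < d -> Rabs (pdist y x - pdist z x) < eps.
Proof.
move=> He.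
have [d [Hd Hdd]] := @seq_epsdelta n (fun w => pdist w x) (fun _ => True) z
  (fun s _ Hs => pdist_cv x Hs) eps He.
by exists d; split => // y Hy; apply: Hdd.
Qed.

Lemma pdist_nbhd n (x z : pt n) R1 : pdist z x < R1 -> exists d, 0 < d /\
  forall y, pdist y z < d -> pdist y x < R1.
Proof.
move=> Hz; have [d [Hd Hdd]] := pdist_cont x z (Rlt_Rminus _ _ Hz).
exists d; split => // y Hy; have := Hdd y Hy; split_Rabs; lra.
Qed.

Section Center.
Variables (n : nat) (al Rr R1 T : R) (x : pt n).
Hypotheses (Hn : (3 <= n)%nat) (Hal : 0 < al) (HR1 : 0 < R1) (HR1R : R1 < Rr)
  (HR1T : R1 * R1 <= T) (HT : T < Rr * Rr).
Let m := (INR n - 2) / 2.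
Let H := H0f al Rr m T.
Let H1 := H1f al Rr m T.
Let H2 := H2f al Rr m T.

Lemma u_in_eq w : pdist w x < R1 -> u_in al Rr x w = rphi H 1 x w.
Proof.
move=> Hw.
have Hr2 : rho2 x w <= R1 * R1 by apply: rho2_le => //; lra.
have HRpos : 0 < Rr by lra.
rewrite /u_in /rphi /H H0f_in; last lra.
rewrite /psi0 pdist_sq.
have HW : 0 < Rr * Rr - rho2 x w by nra.
rewrite /Rdiv -Rpower_mult_distr //; last by apply: Rinv_0_lt_compat.
rewrite Rpower_inv_base // /m /Rdiv; ring.
Qed.

Lemma Du_eq Du D2u : C2_on (ball x Rr) (u_in al Rr x) Du D2u ->
  forall k w, pdist w x < R1 -> Du k w = rDphi H1 1 x k w.
Proof.
move=> [_ [HD _]] k w Hw.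
have Hb : ball x Rr w by rewrite /ball; lra.
have H1d := HD k w Hb.
have H2d : partial_is (u_in al Rr x) k w (rDphi H1 1 x k w).
  have Hd0 := rphi_partial 1 x (dH0 al m HT) k w; rewrite /partial_is in Hd0 *.
  apply: (dpl_local Hd0).
  have [d [Hd Hdd]] := pdist_nbhd Hw.
  exists d; split => // t Ht; symmetry; apply: u_in_eq; apply: Hdd.
  by rewrite pdist_line; rewrite Rminus_0_r in Ht.
exact: (uniqueness_limite _ _ _ _ H1d H2d).
Qed.

Lemma negA_center Du D2u : C2_on (ball x Rr) (u_in al Rr x) Du D2u ->
  negA (u_in al Rr x) Du D2u x = fun i j => 2 * Rpower (1 * al) (- (2 / m)) * mid i j.
Proof.
move=> HC.
have Hx : pdist x x < R1 by rewrite pdist_refl.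
have E2 : forall k l, D2u k l x = rD2phi H1 H2 1 x k l x.
  move=> k l; have [_ [_ [HD2 _]]] := HC.
  have Hb : ball x Rr x by rewrite /ball pdist_refl; lra.
  have H1d := HD2 k l x Hb.
  have H2d : partial_is (Du k) l x (rD2phi H1 H2 1 x k l x).
    have Hd0 := rDphi_partial 1 x (dH1 al m HT) k l x; rewrite /partial_is in Hd0 *.
    apply: (dpl_local Hd0).
    exists R1; split => // t Ht; symmetry; apply: (Du_eq HC).
    by rewrite pdist_line; rewrite Rminus_0_r in Ht.
  exact: (uniqueness_limite _ _ _ _ H1d H2d).
rewrite -(negA_radial (al := al) (Rr := Rr) (c := 1) (T := T) (y := x) (z := x)) //; last first.
- rewrite -pdist_sq pdist_refl; nra.
- lra.
- lra.
rewrite /negA; do 2 (apply: functional_extensionality => ?).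
rewrite u_in_eq //.
have -> : (fun k => Du k x) = (fun k => rDphi H1 1 x k x).
  by apply: functional_extensionality => k; apply: (Du_eq HC).
congr (- conf_hess _ _ _ _ _).
by do 2 (apply: functional_extensionality => ?); apply: E2.
Qed.
End Center.

Lemma usc_div n (v h : pt n -> R) (K : pt n -> Prop) (w : pt n) :
  0 < v w -> 0 < h w ->
  (forall eps, 0 < eps -> exists d, 0 < d /\ forall y, K y -> pdist y w < d -> v y < v w + eps) ->
  (forall eps, 0 < eps -> exists d, 0 < d /\ forall y, pdist y w < d -> Rabs (h y - h w) < eps) ->
  forall eps, 0 < eps -> exists d, 0 < d /\
    forall y, K y -> pdist y w < d -> v y / h y < v w / h w + eps.
Proof.
move=> Hv Hh Hvu Hhc eps He.
set q0 := v w / h w.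
have Hq0 : 0 < q0 by apply: Rdiv_lt_0_compat.
have He1 : 0 < eps * h w / 2 by nra.
have He2 : 0 < eps * h w / (2 * (q0 + eps)).
  apply: Rdiv_lt_0_compat; nra.
have [d1 [Hd1 Hdd1]] := Hvu _ He1.
have [d2 [Hd2 Hdd2]] := Hhc _ He2.
exists (Rmin d1 d2); split; first exact: Rmin_pos.
move=> y Ky Hy.
have Hy1 : pdist y w < d1 by apply: Rlt_le_trans Hy _; apply: Rmin_l.
have Hy2 : pdist y w < d2 by apply: Rlt_le_trans Hy _; apply: Rmin_r.
have H1 := Hdd1 y Ky Hy1.
have H2 := Hdd2 y Hy2.
have Hlow : h w - eps * h w / (2 * (q0 + eps)) < h y by move: H2; split_Rabs; lra.
have Hsmall : eps * h w / (2 * (q0 + eps)) < h w / 2.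
  apply: (Rmult_lt_reg_r (2 * (q0 + eps))); first lra.
  field_simplify; [nra | lra].
have Hhy : 0 < h y by lra.
have Heq : (q0 + eps) * (h w - eps * h w / (2 * (q0 + eps))) = v w + eps * h w / 2.
  by rewrite /q0; field; split; lra.
have Hkey : v y < (q0 + eps) * h y.
  have : (q0 + eps) * (h w - eps * h w / (2 * (q0 + eps))) < (q0 + eps) * h y.
    apply: Rmult_lt_compat_l; lra.
  lra.
apply: (Rmult_lt_reg_r (h y)) => //.
have -> : v y / h y * h y = v y by field; lra.
exact: Hkey.
Qed.

Lemma rho2_refl n (x : pt n) : rho2 x x = 0.
Proof. by rewrite -pdist_sq pdist_refl Rmult_0_l. Qed.

Unset Implicit Arguments.

Theorem lemma3p1 (n : nat) (Hn : (3 <= n)%nat)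
    (f : pt n -> R) (G : pt n -> Prop) (deg : R) (Hstr : structural f G deg)
    (alpha : R) (Halpha : canonical_const f alpha)
    (Om : pt n -> Prop) (HOm : is_domain Om)
    (v : pt n -> R) (Hvpos : forall x, Om x -> 0 < v x) (Hvusc : usc_on Om v)
    (Hsub : visc_subsol f G Om v) :
  forall x, Om x -> forall r, 0 < r -> (forall y, pdist y x < r -> Om y) ->
    Rpower r ((INR n - 2) / 2) * v x <= alpha.
Proof.
move=> x Hx r Hr Hball.
have HN : 3 <= INR n.
  have := le_INR 3 n (ssrnat.leP Hn).
  have -> : INR 3 = 3 by simpl; ring.
  done.
set m := (INR n - 2) / 2.
have Hm : 0 < m by rewrite /m; lra.
case: Halpha => Hal Hcan.
case: Hstr => _ [_ [_ [_ [_ [_ [_ [_ [_ [_ [Hdeg Hhom]]]]]]]]]].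
apply: Rnot_lt_le => Hgt.
have Hvx := Hvpos x Hx.
(* a radius Rp < r with Rp^m v(x) > alpha *)
set R0 := Rpower (alpha / v x) (/ m).
have HR0 : 0 < R0 by apply: Rpower_pos.
have HR0m : Rpower R0 m = alpha / v x.
  rewrite /R0 Rpower_mult Rinv_l; last lra.
  apply: Rpower_1; exact: Rdiv_lt_0_compat.
have HR0r : R0 < r.
  apply: Rnot_le_lt => Hle.
  have : Rpower r m <= Rpower R0 m.
    case: (Rle_lt_or_eq_dec _ _ Hle) => [Hlt|->]; last lra.
    by apply: Rlt_le; apply: Rpower_lt_base.
  rewrite HR0m => H1.
  have : Rpower r m * v x <= alpha / v x * v x by apply: Rmult_le_compat_r; lra.
  have -> : alpha / v x * v x = alpha by field; lra.
  lra.
set Rp := (R0 + r) / 2.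
have HRp : 0 < Rp by rewrite /Rp; lra.
have HRpr : Rp < r by rewrite /Rp; lra.
set A := Rpower Rp m.
have HA : 0 < A by apply: Rpower_pos.
have HRpm : alpha < A * v x.
  have : Rpower R0 m < A by apply: Rpower_lt_base => //; rewrite /Rp; lra.
  rewrite HR0m => H1.
  have : alpha / v x * v x < A * v x by apply: Rmult_lt_compat_r.
  have -> : alpha / v x * v x = alpha by field; lra.
  done.
have Husc : forall rho, rho <= Rp -> forall w, pdist w x <= rho -> forall eps, 0 < eps ->
    exists d, 0 < d /\ forall y, pdist y x <= rho -> pdist y w < d -> v y < v w + eps.
  move=> rho Hrho w Hw eps He.
  have [d [Hd Hdd]] := Hvusc w (Hball w ltac:(lra)) eps He.
  exists d; split => // y Hy Hyw; apply: Hdd => //; apply: Hball; lra.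
have [zM [HzM HM]] := usc_max (g := v) (x := x) (rho := Rp) (Rlt_le _ _ HRp) (Husc Rp (Rle_refl _)).
set M := v zM.
have HMx : v x <= M by apply: HM; rewrite pdist_refl; lra.
have HMpos : 0 < M by lra.
have Hpsi00 : psi0 alpha Rp m 0 = alpha * / A.
  rewrite /psi0 Rminus_0_r -Rpower_mult_distr // Rpower_Ropp /A.
  field; apply: Rgt_not_eq; apply: Rpower_pos.
set q0 := v x / (alpha * / A).
have Hq0 : 1 < q0.
  rewrite /q0; apply: (Rmult_lt_reg_r (alpha * / A)).
    by apply: Rmult_lt_0_compat => //; apply: Rinv_0_lt_compat.
  have -> : v x / (alpha * / A) * (alpha * / A) = v x by field; lra.
  apply: (Rmult_lt_reg_r A) => //.
  have -> : 1 * (alpha * / A) * A = alpha by field; lra.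
  lra.
set B := M / (q0 * alpha * A).
have HB : 0 < B.
  rewrite /B; apply: Rdiv_lt_0_compat => //.
  have : 0 < q0 * alpha by apply: Rmult_lt_0_compat; lra.
  move=> H0; apply: Rmult_lt_0_compat => //.
set b1 := Rpower B (- / m).
have Hb1 : 0 < b1 by apply: Rpower_pos.
set w1 := Rmin (Rp * Rp / 2) (b1 / 2).
have Hw1 : 0 < w1 by apply: Rmin_pos; nra.
have Hw1a : w1 <= Rp * Rp / 2 by apply: Rmin_l.
have Hw1b : w1 < b1 by have := Rmin_r (Rp * Rp / 2) (b1 / 2); rewrite -/w1; lra.
have Hw1B : B < Rpower w1 (- m).
  have := Rpower_lt_base_neg (p := - m) Hw1 Hw1b ltac:(lra).
  rewrite /b1 Rpower_mult.
  have -> : - / m * - m = 1 by field; lra.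
  by rewrite Rpower_1.
set R1 := sqrt (Rp * Rp - w1).
have HR1sq : R1 * R1 = Rp * Rp - w1 by rewrite /R1 sqrt_sqrt; nra.
have HR1 : 0 < R1 by rewrite /R1; apply: sqrt_lt_R0; nra.
have HR1Rp : R1 < Rp by nra.
set T1 := Rp * Rp - w1 / 2.
have HT1a : R1 * R1 <= T1 by rewrite HR1sq /T1; lra.
have HT1b : T1 < Rp * Rp by rewrite /T1; lra.
set H := H0f alpha Rp m T1.
set H1 := H1f alpha Rp m T1.
set H2 := H2f alpha Rp m T1.
have dH := dH0 alpha m HT1b.
have dHH1 := dH1 alpha m HT1b.
have cHH2 := cH2 alpha m HT1b.
have HposH : forall w, pdist w x <= R1 -> 0 < H (rho2 x w).
  move=> w Hw; have Hrw := rho2_le (Rlt_le _ _ HR1) Hw.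
  rewrite /H H0f_in; last lra.
  rewrite /psi0; repeat apply: Rmult_lt_0_compat => //; apply: Rpower_pos.
have Hcont : forall w eps, 0 < eps -> exists d, 0 < d /\
    forall y, pdist y w < d -> Rabs (H (rho2 x y) - H (rho2 x w)) < eps.
  move=> w eps He.
  have [d [Hd Hdd]] := @seq_epsdelta n (fun z => H (rho2 x z)) (fun _ => True) w
    (fun s _ Hs => continuity_seq _ _ _ (cH dH _) (rho2_cv x Hs)) eps He.
  by exists d; split => // y Hy; apply: Hdd.
(* maximum of the ratio on the closed ball of radius R1 *)
set q := fun w => v w / H (rho2 x w).
have Huscq : forall w, pdist w x <= R1 -> forall eps, 0 < eps ->
    exists d, 0 < d /\ forall y, pdist y x <= R1 -> pdist y w < d -> q y < q w + eps.
  move=> w Hw eps He.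
  apply: (usc_div (K := fun y => pdist y x <= R1)) => //.
  - apply: Hvpos; apply: Hball; lra.
  - exact: HposH.
  - apply: (Husc R1) => //; lra.
  - exact: Hcont.
have [zs [Hzs Hq]] := usc_max (g := q) (x := x) (rho := R1) (Rlt_le _ _ HR1) Huscq.
set cs := q zs.
have Hqx : q x = q0.
  rewrite /q rho2_refl /H H0f_in; last lra.
  by rewrite Hpsi00.
have Hcs : q0 <= cs by rewrite -Hqx; apply: Hq; rewrite pdist_refl; lra.
have Hcs1 : 1 < cs by lra.
have HOzs : Om zs by apply: Hball; lra.
have HHzs := HposH zs Hzs.
have Hint : pdist zs x < R1.
  case: (Rle_lt_or_eq_dec _ _ Hzs) => // Heq; exfalso.
  have Hrz : rho2 x zs = R1 * R1 by rewrite -pdist_sq Heq.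
  have Hval : M / q0 < H (rho2 x zs).
    rewrite Hrz /H H0f_in // /psi0.
    have -> : Rp * Rp - R1 * R1 = w1 by lra.
    have -> : M / q0 = alpha * A * B by rewrite /B; field; repeat split; lra.
    apply: Rmult_lt_compat_l => //; nra.
  have Hvzs : v zs <= M by apply: HM; lra.
  have : cs < q0.
    rewrite /cs /q.
    apply: (Rmult_lt_reg_r (H (rho2 x zs))) => //.
    have -> : v zs / H (rho2 x zs) * H (rho2 x zs) = v zs by field; lra.
    have : q0 * (M / q0) < q0 * H (rho2 x zs) by apply: Rmult_lt_compat_l; lra.
    have -> : q0 * (M / q0) = M by field; lra.
    lra.
  lra.
have [d [Hd Hdd]] := pdist_nbhd Hint.
have := Hsub zs (rphi H cs x) (rDphi H1 cs x) (rD2phi H1 H2 cs x) HOzs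
  (rphi_C2 cs x dH dHH1 cHH2 Om).
case.
- rewrite /rphi /cs /q; field; lra.
- exists d; split => // y Oy Hy.
  have Hyx := Hdd y Hy.
  have Hyq : q y <= cs by apply: Hq; lra.
  have HHy := HposH y (Rlt_le _ _ Hyx).
  rewrite /rphi.
  have : v y / H (rho2 x y) * H (rho2 x y) <= cs * H (rho2 x y).
    by apply: Rmult_le_compat_r; [lra | exact: Hyq].
  have -> : v y / H (rho2 x y) * H (rho2 x y) = v y by field; lra.
  lra.
move=> mu [Heig [Hcl Hf1]].
have Hrzs : rho2 x zs <= T1 by have := rho2_le (Rlt_le _ _ HR1) Hzs; lra.
rewrite (negA_radial (al := alpha) (Rr := Rp) (c := cs) (T := T1) (y := x) (z := zs)) in Heig;
  try lra; try exact: Hn.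
have Hmu := eig_scalar Heig.
have [Hin _] := Hcan Rp x HRp.
case: Hin => Du [D2u [HC2 Heig0]].
have [mu0 [Hmu0 Hf0]] := Heig0 x ltac:(rewrite /ball pdist_refl; lra).
rewrite (negA_center Hn Hal HR1 HR1Rp HT1a HT1b HC2) in Hmu0.
have Hmu0' := eig_scalar Hmu0.
(* contradiction via homogeneity *)
set t := Rpower cs (2 / m).
have Ht : 1 < t by apply: Rpower_gt1 => //; apply: Rdiv_lt_0_compat; lra.
have Hscal : ptscal t mu = mu0.
  apply: functional_extensionality => i; rewrite /ptscal Hmu Hmu0'.
  rewrite -(Rpower_mult_distr cs alpha); try lra.
  rewrite Rmult_1_l.
  have : t * Rpower cs (- (2 / m)) = 1 by apply: Rpower_opp_mul; lra.
  rewrite /m => Htt; rewrite -[RHS]Rmult_1_l -Htt; ring.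
have := Hhom t mu ltac:(lra) Hcl.
rewrite Hscal Hf0 => Hfeq.
have Htd : 1 < Rpower t deg by apply: Rpower_gt1.
have : Rpower t deg * 1 <= Rpower t deg * f mu by apply: Rmult_le_compat_l; lra.
lra.
Qed.
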